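(* Consider an instance of restricted assignment with interval restrictions in which every job has a nonempty eligible interval, with machines identified with $\{0,\dots,m-1\}$ in their order and $\mathcal{M}(j)=\{\ell(j),\dots,r(j)\}$. Let $\mathrm{OPT}$ be the optimal makespan and let $$L=\max\Big\{\max_{j\in\mathcal{J}}p_j,\ \max_{0\le \ell\le r\le m-1}\frac{p(\mathcal{J}(\ell,r))}{r-\ell+1}\Big\},$$ where $\mathcal{J}(\ell,r)=\{j\in\mathcal{J}: \mathcal{M}(j)\subseteq\{\ell,\dots,r\}\}$ and $p(J)=\sum_{j\in J}p_j$. Consider the least flexible first heuristic: starting with machine $i^*=0$, repeatedly do the following: let $J$ be the set of not yet placed jobs eligible on $i^*$; if the load currently placed on $i^*$ is at most $L$ and $J\neq\emptyset$, place on $i^*$ a job $j\in J$ with minimal $r(j)$ and consider $i^*$ again; otherwise move to the next machine $i^*+1$, or stop if there is none. Then this heuristic places every job, and every machine receives a load of at most $L+\max_{j\in\mathcal{J}}p_j\le 2\,\mathrm{OPT}$.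
   Context: Restricted assignment with interval restrictions: jobs $\mathcal{J}$ with sizes $p_j\ge0$, machines $\{0,\dots,m-1\}$ in a fixed order, each job $j$ eligible exactly on the consecutive machines $\{\ell(j),\dots,r(j)\}$; a schedule assigns each job to an eligible machine, the load of a machine is the total size of jobs assigned to it, and the makespan is the maximum load; $\mathrm{OPT}$ is the minimum makespan over all schedules. *)

(* Defs.v *)
From Stdlib Require Import Relations.
From mathcomp Require Import all_boot all_order all_algebra.
Set Implicit Arguments. Unset Strict Implicit. Unset Printing Implicit Defensive.
Import Order.TTheory GRing.Theory Num.Theory.
Local Open Scope ring_scope.

Section Instance.
Variables (R : realFieldType) (n m : nat) (p : 'I_n -> R) (ell r : 'I_n -> nat).
(* Jobs are 'I_n, machines are 0..m-1, job j is eligible on {ell j,...,r j}. *)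

(* max_j p_j  (base 0 is harmless since p >= 0) *)
Definition pmax : R := \big[Num.max/0]_(j < n) p j.

Definition pJ (l rr : nat) : R := \sum_(j < n | (l <= ell j)%N && (r j <= rr)%N) p j.

Definition Lbound : R :=
  Num.max pmax
    (\big[Num.max/0]_(l < m) \big[Num.max/0]_(rr < m | (l <= rr)%N)
        (pJ l rr / ((rr - l + 1)%N)%:R)).

Definition valid_schedule (sigma : 'I_n -> nat) : Prop :=
  forall j, (ell j <= sigma j <= r j)%N.

Definition makespan (sigma : 'I_n -> nat) : R :=
  \big[Num.max/0]_(i < m) \sum_(j < n | sigma j == i :> nat) p j.

Definition is_OPT (o : R) : Prop :=
  (exists2 sigma, valid_schedule sigma & makespan sigma = o) /\
  (forall sigma, valid_schedule sigma -> o <= makespan sigma).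

(* Partial assignment during the heuristic: None = not yet placed. *)
Definition load (a : 'I_n -> option nat) (i : nat) : R :=
  \sum_(j < n | a j == Some i) p j.

Definition eligible_unplaced (a : 'I_n -> option nat) (i : nat) (j : 'I_n) : bool :=
  (a j == None) && (ell j <= i <= r j)%N.

(* States of the least-flexible-first heuristic: (current machine i*, assignment).
   i* = m means the heuristic has stopped. *)
Definition lff_state := (nat * ('I_n -> option nat))%type.

Definition upd (a : 'I_n -> option nat) (j : 'I_n) (i : nat) : 'I_n -> option nat :=
  fun k => if k == j then Some i else a k.

Inductive lff_step : lff_state -> lff_state -> Prop :=
  | lff_place : forall i a j,
      (i < m)%N ->
      load a i <= Lbound ->
      eligible_unplaced a i j ->
      (forall j', eligible_unplaced a i j' -> (r j <= r j')%N) ->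
      lff_step (i, a) (i, upd a j i)
  | lff_move : forall i a,
      (i < m)%N ->
      ~ (load a i <= Lbound /\ exists j, eligible_unplaced a i j) ->
      lff_step (i, a) (i.+1, a).

Definition lff_init : lff_state := (0%N, fun _ => None).

End Instance.

(* Main.v *)
Require Import Defs.
From Stdlib Require Import Relations Classical.
From mathcomp Require Import all_boot all_order all_algebra.
From mathcomp Require Import zify.
Import Order.TTheory GRing.Theory Num.Theory.
Set Implicit Arguments. Unset Strict Implicit.
Local Open Scope ring_scope.

Section Aux.
Variables (R : realFieldType) (n : nat).

Lemma sum_partition (a : 'I_n -> option nat) (q : 'I_n -> R) (l h : nat) :
  \sum_(l <= k < h) \sum_(j < n | a j == Some k) q j =
  \sum_(j < n | if a j is Some k then (l <= k < h)%N else false) q j.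
Proof.
elim: h => [|h IH].
  rewrite big_geq // big_pred0 // => j /=; case: (a j) => // k; lia.
case: (leqP l h) => lh.
  rewrite big_nat_recr //= IH [RHS]big_mkcond [X in X + _]big_mkcond [X in _ + X]big_mkcond -big_split /=.
  apply: eq_bigr => j _; case: (a j) => [k|] /=; last by rewrite addr0.
  have -> : (Some k == Some h) = (k == h) by [].
  case: (ltngtP k h) => [kh|hk|->].
  - have -> : (k < h.+1)%N by lia.
    by rewrite andbT addr0.
  - have -> : (k < h.+1)%N = false by apply/negbTE; lia.
    by rewrite !andbF addr0.
  - by rewrite andbF ltnSn lh add0r.
rewrite big_geq // big_pred0 // => j /=; case: (a j) => // k; lia.
Qed.

Lemma sumr_nonneg_sub (P Q : pred 'I_n) (q : 'I_n -> R) :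
  (forall j, 0 <= q j) -> (forall j, P j -> Q j) ->
  \sum_(j | P j) q j <= \sum_(j | Q j) q j.
Proof.
move=> q0 PQ; rewrite big_mkcond [X in _ <= X]big_mkcond; apply: ler_sum => j _.
case: ifP => Pj; first by rewrite PQ.
by case: ifP.
Qed.

End Aux.

Section Opt.
Variables (R : realFieldType) (n m : nat) (p : 'I_n -> R) (ell r : 'I_n -> nat).
Hypothesis p_ge0 : forall j, 0 <= p j.
Hypothesis interval_ok : forall j, (ell j <= r j)%N /\ (r j < m)%N.

Lemma pmax_ge0 : 0 <= pmax p.
Proof. exact: bigmax_ge_id. Qed.

Lemma p_le_pmax j : p j <= pmax p.
Proof. exact: le_bigmax. Qed.

Lemma pmax_le_L : pmax p <= Lbound m p ell r.
Proof. by rewrite /Lbound le_max lexx. Qed.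

Lemma pJ_le_L l rr : (l <= rr)%N -> (rr < m)%N ->
  pJ p ell r l rr <= Lbound m p ell r *+ (rr.+1 - l).
Proof.
move=> lr rm.
have cpos : 0 < ((rr - l + 1)%N)%:R :> R by rewrite ltr0n; lia.
have : pJ p ell r l rr / ((rr - l + 1)%N)%:R <= Lbound m p ell r.
  rewrite /Lbound le_max; apply/orP; right.
  apply: le_trans (le_bigmax _ _ (Ordinal (leq_ltn_trans lr rm))).
  by apply: (@le_bigmax_cond _ _ _ _ (Ordinal rm)).
rewrite ler_pdivrMr // mulr_natr => H.
have E : (rr - l + 1)%N = (rr.+1 - l)%N by lia.
by rewrite -E.
Qed.

Lemma opt_bound sigma : valid_schedule ell r sigma ->
  pmax p <= makespan m p sigma /\ Lbound m p ell r <= makespan m p sigma.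
Proof.
move=> vs.
set M := makespan m p sigma.
have M0 : 0 <= M by exact: bigmax_ge_id.
have loadM : forall k, (k < m)%N -> \sum_(j < n | sigma j == k) p j <= M.
  move=> k km; exact: (le_bigmax _ _ (Ordinal km)).
have pM : pmax p <= M.
  apply: bigmax_le => // j _.
  have sm : (sigma j < m)%N by have := vs j; have := interval_ok j; lia.
  apply: le_trans (loadM _ sm).
  rewrite (bigD1 j) //= lerDl; apply: sumr_ge0 => *; exact: p_ge0.
split => //.
rewrite /Lbound ge_max pM /=.
apply: bigmax_le => // l _; apply: bigmax_le => // rr lr.
have cpos : 0 < ((rr - l + 1)%N)%:R :> R by rewrite ltr0n; lia.
rewrite ler_pdivrMr //.
have -> : (rr - l + 1)%N = (rr.+1 - l)%N by lia.
apply: le_trans (_ : \sum_(l <= k < rr.+1) \sum_(j < n | Some (sigma j) == Some k) p j <= _).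
  rewrite sum_partition; apply: sumr_nonneg_sub => // j /andP[lj rj].
  by have := vs j; lia.
rewrite mulr_natr -sumr_const_nat; apply: ler_sum_nat => k /andP[_ kr].
apply: (loadM k); by have := ltn_ord rr; lia.
Qed.

End Opt.

Lemma down_ex (P : nat -> Prop) i : P i -> exists l, (l <= i)%N /\
  (forall k, (l <= k <= i)%N -> P k) /\ (l = 0%N \/ exists l', l = l'.+1 /\ ~ P l').
Proof.
move=> Pi.
suff H : forall l0, (l0 <= i)%N -> (forall k, (l0 <= k <= i)%N -> P k) ->
  exists l, (l <= i)%N /\ (forall k, (l <= k <= i)%N -> P k) /\
    (l = 0%N \/ exists l', l = l'.+1 /\ ~ P l').
  apply: (H i) => // k hk; have -> : k = i by lia. done.
elim=> [|l' IH] li hP; first by exists 0%N; split => //; split => //; left.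
case: (classic (P l')) => Pl'.
  apply: IH; first lia.
  move=> k hk; case: (k =P l') => [->//|kl]; apply: hP; lia.
by exists l'.+1; split => //; split => //; right; exists l'.
Qed.

Section Heur.
Variables (R : realFieldType) (n m : nat) (p : 'I_n -> R) (ell r : 'I_n -> nat).
Hypothesis p_ge0 : forall j, 0 <= p j.
Hypothesis interval_ok : forall j, (ell j <= r j)%N /\ (r j < m)%N.

Local Notation L := (Lbound m p ell r).

Definition inU (l : nat) (a : 'I_n -> option nat) j : Prop :=
  match a j with None => True | Some k => (l <= k)%N end.

Record InvR (i : nat) (a : 'I_n -> option nat) : Prop := {
  Iim : (i <= m)%N;
  Ia : forall j k, a j = Some k -> (ell j <= k <= r j)%N /\ (k <= i)%N;
  Ib : forall k, load p a k <= L + pmax p;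
  Ic : forall j, a j = None -> (i <= r j)%N;
  IH1 : forall l, (l < i)%N -> load p a l <= L -> forall j, inU l.+1 a j -> (l < ell j)%N;
  IH2 : forall l j' j, (l <= i)%N -> a j' = Some l -> inU l.+1 a j -> (ell j <= l)%N ->
          (r j' <= r j)%N
}.

Lemma load_upd a j0 i k : a j0 = None ->
  load p (upd a j0 i) k = load p a k + (if i == k then p j0 else 0).
Proof.
move=> a0; rewrite /load big_mkcond [in RHS]big_mkcond (bigD1 j0) //= [in RHS](bigD1 j0) //=.
rewrite /upd eqxx a0.
have -> : \sum_(i0 < n | i0 != j0)
   (if (if i0 == j0 then Some i else a i0) == Some k then p i0 else 0) =
  \sum_(i0 < n | i0 != j0) (if a i0 == Some k then p i0 else 0).
  by apply: eq_bigr => j /negbTE ->.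
have -> : (Some i == Some k) = (i == k) by [].
by case: (i == k); rewrite /= ?add0r ?addr0 // addrC.
Qed.

Lemma key i a : InvR i a -> (i < m)%N ->
  ~ (load p a i <= L /\ exists j, eligible_unplaced ell r a i j) ->
  forall j, a j = None -> (i < r j)%N.
Proof.
move=> I im hn js ajs; rewrite ltnNge; apply/negP => rjs.
have rjsi : r js = i by have := Ic I ajs; lia.
have eljs : eligible_unplaced ell r a i js.
  by rewrite /eligible_unplaced ajs /=; have := interval_ok js; lia.
have Lt : L < load p a i.
  rewrite ltNge; apply/negP => h; apply: hn; split => //; by exists js.
pose P k := L < load p a k /\ forall j', a j' = Some k -> (r j' <= i)%N.
have Pi : P i.
  split => // j' aj'.
  rewrite -rjsi; apply: (IH2 I (l := i)) => //; first by rewrite /inU ajs.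
  by have := interval_ok js; lia.
have [l [li [hP hl]]] := down_ex Pi.
have star : forall j, inU l a j -> (r j <= i)%N -> (l <= ell j)%N.
  case: hl => [-> //|[l' [El nP]]] j hU rji; subst l.
  have [h1|h2] : load p a l' <= L \/ exists j', a j' = Some l' /\ ~ (r j' <= i)%N.
    case: (classic (load p a l' <= L)) => h; first by left.
    right; case: (classic (exists j', a j' = Some l' /\ ~ (r j' <= i)%N)) => // hh.
    exfalso; apply: nP; split; first by rewrite ltNge; apply/negP.
    move=> j' aj'; case: (classic (r j' <= i)%N) => // hr; exfalso; apply: hh; by exists j'.
  - apply: (IH1 I) => //; lia.
  - case: h2 => j' [aj' nr].
    case: (leqP (ell j) l') => // hel.
    have := IH2 I (l := l') (j' := j') (j := j); rewrite aj'; move=> /(_ _ erefl hU hel).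
    have : (l' <= i)%N by lia. move=> q /(_ q); lia.
have S1 : \sum_(l <= k < i.+1) load p a k =
  \sum_(j < n | if a j is Some k then (l <= k < i.+1)%N else false) p j.
  by rewrite /load sum_partition.
have S2 : \sum_(j < n | if a j is Some k then (l <= k < i.+1)%N else false) p j + p js
   <= pJ p ell r l i.
  rewrite /pJ [X in _ <= X](bigD1 js) /=; last first.
    apply/andP; split; last lia. apply: star; [by rewrite /inU ajs | lia].
  rewrite [X in X <= _]addrC lerD2l; apply: sumr_nonneg_sub => // j.
  case ajk: (a j) => [k|] // /andP[lk ki].
  have rji : (r j <= i)%N by case: (hP k) => [|_ h]; [lia| apply: h].
  have -> : j != js by apply/eqP => e; rewrite e ajs in ajk; congruence.
  rewrite rji !andbT; apply: star => //; by rewrite /inU ajk.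
have S3 : L *+ (i.+1 - l) < \sum_(l <= k < i.+1) load p a k.
  rewrite big_nat_recr //= subSn // mulrS addrC.
  apply: ler_ltD.
    rewrite -sumr_const_nat; apply: ler_sum_nat => k' hk.
    have [h _] := hP k' ltac:(lia). exact: ltW.
  by [].
have S4 := pJ_le_L p ell r li im.
have : L *+ (i.+1 - l) < L *+ (i.+1 - l).
  apply: (lt_le_trans S3); apply: le_trans S4; apply: le_trans S2.
  by rewrite S1 lerDl.
by rewrite ltxx.
Qed.

End Heur.

Section Heur2.
Variables (R : realFieldType) (n m : nat) (p : 'I_n -> R) (ell r : 'I_n -> nat).
Hypothesis p_ge0 : forall j, 0 <= p j.
Hypothesis interval_ok : forall j, (ell j <= r j)%N /\ (r j < m)%N.

Local Notation L := (Lbound m p ell r).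
Local Notation step := (lff_step m p ell r).

Definition Inv (s : lff_state n) : Prop := InvR m p ell r s.1 s.2.

Lemma inv_init : Inv (lff_init n).
Proof.
have l0 : forall k, load p (fun _ : 'I_n => None) k = 0.
  by move=> k; rewrite /load big_pred0.
split => //=.
- move=> k; rewrite l0; apply: addr_ge0; last exact: pmax_ge0.
  exact: le_trans (pmax_ge0 p) (pmax_le_L m p ell r).
Qed.

Lemma inv_step s t : step s t -> Inv s -> Inv t.
Proof.
case=> [i a j0 im hL he hmin | i a im hn] I; rewrite /Inv /= in I *.
- move: (he); rewrite /eligible_unplaced => /andP[/eqP a0 /andP[e1 e2]].
  have U : forall l j, inU l (upd a j0 i) j -> inU l a j.
    by move=> l j; rewrite /inU /upd; case: (j =P j0) => [->|]; rewrite ?a0.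
  split.
  + exact: (Iim I).
  + move=> j k; rewrite /upd; case: (j =P j0) => [->|_].
      by case=> <-; lia.
    move=> /(Ia I) [h1 h2]; lia.
  + move=> k; rewrite load_upd //; case: (i =P k) => [<-|_].
      apply: lerD => //; exact: p_le_pmax.
    by rewrite addr0; apply: (Ib I).
  + move=> j; rewrite /upd; case: (j =P j0) => // _; exact: (Ic I).
  + move=> l li; rewrite load_upd //.
    have -> : (i == l) = false by apply/eqP; lia.
    rewrite addr0 => hl j /U; exact: (IH1 I li hl).
  + move=> l j' j li; rewrite /upd; case: (j' =P j0) => [-> | _].
      case=> <- hU hel.
      have aj : a j = None.
        move: hU; rewrite /inU /upd; case: (j =P j0) => [_|_]; first lia.
        case ajk: (a j) => [k|] // hk; have := Ia I ajk; lia.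
      apply: hmin; rewrite /eligible_unplaced aj /=; have := Ic I aj; lia.
    move=> aj' /U; exact: (IH2 I li aj').
- split => /=.
  + exact: im.
  + move=> j k /(Ia I) [h1 h2]; lia.
  + exact: (Ib I).
  + exact: (key p_ge0 interval_ok I im hn).
  + move=> l li hl j hU; case: (ltngtP l i) => [lt|gt|eq].
    * exact: (IH1 I lt hl).
    * lia.
    * subst l. move: hU; rewrite /inU; case ajk: (a j) => [k|] hU.
        have := Ia I ajk; lia.
      case: (leqP (ell j) i) => // hel; exfalso; apply: hn; split => //.
      exists j; rewrite /eligible_unplaced ajk /=; have := Ic I ajk; lia.
  + move=> l j' j li aj'; have := Ia I aj'; move=> [_ h].
    exact: (IH2 I h aj').
Qed.

Lemma inv_reach s t : clos_refl_trans _ step s t -> Inv s -> Inv t.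
Proof.
elim=> [x y st|x|x y z _ IH1 _ IH2] //; first exact: inv_step.
by move=> /IH1 /IH2.
Qed.

Definition meas (s : lff_state n) : nat :=
  ((m - s.1) * n.+1 + \sum_(j < n) (s.2 j == None))%N.

Lemma meas_step s t : step s t -> (meas t < meas s)%N.
Proof.
case=> [i a j0 im hL he hmin | i a im hn]; rewrite /meas /=.
- move: (he); rewrite /eligible_unplaced => /andP[/eqP a0 _].
  rewrite ltn_add2l (bigD1 j0) //= [X in (_ < X)%N](bigD1 j0) //= /upd eqxx a0 /=.
  rewrite add0n add1n ltnS; apply: eq_leq; apply: eq_bigr => j /negbTE -> //.
- have : ((m - i.+1) * n.+1 < (m - i) * n.+1)%N.
    rewrite ltn_pmul2r //; lia.
  lia.
Qed.

Lemma acc_all s : Acc (fun t s => step s t) s.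
Proof.
suff H : forall N s, (meas s < N)%N -> Acc (fun t s => step s t) s by exact: (H _ _ (ltnSn _)).
elim=> [|N IH] s' hs; first by [].
constructor => t st; apply: IH; have := meas_step st; lia.
Qed.

End Heur2.

Theorem lemma2 (R : realFieldType) (n m : nat) (p : 'I_n -> R)
    (ell r : 'I_n -> nat)
    (p_ge0 : forall j, 0 <= p j)
    (interval_ok : forall j, (ell j <= r j)%N /\ (r j < m)%N) :
  let step := lff_step m p ell r in
  let L := Lbound m p ell r in
                                                      
  Acc (fun t s => step s t) (lff_init n) /\
                                                                               
  (forall s, clos_refl_trans _ step (lff_init n) s -> s.1 = m ->
     (forall j, exists2 i, s.2 j = Some i & (ell j <= i <= r j)%N) /\
     (forall i, (i < m)%N -> load p s.2 i <= L + pmax p)) /\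
                             
  (forall o, is_OPT m p ell r o -> L + pmax p <= 2 * o).
Proof.
move=> step L; split; first exact: acc_all.
split.
  move=> s hs e.
  have I := inv_reach p_ge0 interval_ok hs (inv_init m p ell r).
  rewrite /Inv e in I; split; last by move=> i _; exact: (Ib I).
  move=> j; case aj: (s.2 j) => [k|].
    by exists k => //; have := Ia I aj; lia.
  have := Ic I aj; have := interval_ok j; lia.
move=> o [[sigma vs <-] _].
have [h1 h2] := opt_bound p_ge0 interval_ok vs.
by rewrite mulr_natl mulr2n; apply: lerD.
Qed.
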